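(* Let $\Omega=\{0,1\}^{\mathbb{N}}$ with canonical process $X=(X_t)_{t\in\mathbb{N}}$, natural filtration $\mathcal{F}_t=\sigma(X_s,s\le t)$ ($\mathcal{F}_0$ trivial), $\mathcal{F}=\sigma(\bigcup_t\mathcal{F}_t)$. Define probability measures $\mathbb{P}_1,\mathbb{P}_2$ on $\mathcal{F}$ by: $\mathbb{P}_i(X_1=1)=1/2$ for $i=1,2$; conditionally on $X_1$, the variables $X_2,X_3,\dots$ are independent under both measures with, for $t\ge2$, $\mathbb{P}_1(X_t=1\mid X_1=1)=\mathbb{P}_2(X_t=1\mid X_1=0)=1/2$ and $\mathbb{P}_1(X_t=1\mid X_1=0)=\mathbb{P}_2(X_t=1\mid X_1=1)=2^{-t}$. Let $\mathcal{P}=\{\mathbb{P}_1,\mathbb{P}_2\}$ and $A=\{X_t=1\text{ for infinitely many }t\in\mathbb{N}\}$. Then $\mu^*(A)=1/2$, and there is no $\mathcal{P}$-e-process $(E_t)_{t\in\mathbb{N}_0}$ satisfying $\sup_{t\in\mathbb{N}_0}E_t\ge 1/\mu^*(A)=2$ at every point of $A$. More precisely, if $(E_t)$ is a $\mathcal{P}$-e-process and $c\in[1,\infty)$ is such that $\sup_tE_t\ge c$ on $A$, then $c<2$.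
   Context: Stopping times are with respect to the filtration above (values in $\mathbb{N}_0\cup\{\infty\}$), $\mathcal{T}$ is the set of all stopping times. Inverse-capital measure: $\mu^*(B) = \inf_{\tau\in\mathcal{T}:\, B\subseteq\{\tau<\infty\}} \sup_{\mathbb{P}\in\mathcal{P}} \mathbb{P}(\tau<\infty)$ for $B\subseteq\Omega$. A $\mathcal{P}$-e-process is a nonnegative (possibly $[0,\infty]$-valued) process $(E_t)_{t\in\mathbb{N}_0}$ adapted to $(\mathcal{F}_t)$ such that $\mathbb{E}_{\mathbb{P}}[E_\tau]\le 1$ for every $\mathbb{P}\in\mathcal{P}$ and every $\tau\in\mathcal{T}$, with the convention $E_\infty=\limsup_{t\to\infty}E_t$. *)

(* Defs.v *)
From HB Require Import structures.
From mathcomp Require Import all_boot all_order all_algebra.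
From mathcomp Require Import all_classical all_reals all_analysis measurable_realfun.
Set Implicit Arguments. Unset Strict Implicit. Unset Printing Implicit Defensive.
Import Order.TTheory GRing.Theory Num.Theory.
Local Open Scope classical_set_scope.
Local Open Scope ring_scope.

(* Sample space Omega = {0,1}^N, N = {1,2,...}: a point is x : nat -> bool and
   the canonical process is X_t x := x (t-1), for t >= 1. *)
Definition Omega0 := nat -> bool.
Definition X (t : nat) (x : Omega0) : bool := x t.-1.

Definition gen_upto (t : nat) : set (set Omega0) :=
  [set A | exists s b, (1 <= s <= t)%N /\ A = X s @^-1` [set b]].
Definition gen_all : set (set Omega0) :=
  [set A | exists s b, (1 <= s)%N /\ A = X s @^-1` [set b]].

Definition Ftime (t : nat) : set (set Omega0) := <<s gen_upto t >>.

Definition Omega := g_sigma_algebraType gen_all.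

(* stopping times with values in N_0 U {oo}; None stands for oo *)
Definition stopping_time (tau : Omega -> option nat) : Prop :=
  forall t : nat, Ftime t [set x | exists s, tau x = Some s /\ (s <= t)%N].

Definition finite_at (tau : Omega -> option nat) : set Omega :=
  [set x | tau x <> None].

Definition stopped {R : realType} (E : nat -> Omega -> \bar R)
    (tau : Omega -> option nat) (x : Omega) : \bar R :=
  match tau x with
  | Some t => E t x
  | None => limn_esup (fun t => E t x)
  end.

Section Defs.
Context {R : realType}.
Local Open Scope ereal_scope.

Definition mu_star (Pfam : set (probability Omega R)) (B : set Omega) : \bar R :=
  ereal_inf [set r | exists tau, stopping_time tau /\
     B `<=` finite_at tau /\
     r = ereal_sup [set y | exists2 P, Pfam P & y = P (finite_at tau)]].

Definition e_process (Pfam : set (probability Omega R))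
    (E : nat -> Omega -> \bar R) : Prop :=
  [/\ (forall t x, 0 <= E t x),
      (forall t (B : set (\bar R)), measurable B -> Ftime t (E t @^-1` B)) &
      (forall P, Pfam P -> forall tau, stopping_time tau ->
          \int[P]_x stopped E tau x <= 1)].
End Defs.

Definition cyl (n : nat) (b : nat -> bool) : set Omega :=
  [set x | forall t, (1 <= t <= n)%N -> X t x = b t].

(* Probability of a cylinder under the law: X_1 ~ Bernoulli(1/2), and given
   X_1 = b1 the X_t (t >= 2) are independent Bernoulli(q b1 t). *)
Definition cyl_prob {R : realType} (q : bool -> nat -> R) (n : nat)
    (b : nat -> bool) : R :=
  2^-1 * \prod_(2 <= t < n.+1) (if b t then q (b 1%N) t else 1 - q (b 1%N) t).

Definition q1 {R : realType} (b1 : bool) (t : nat) : R :=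
  if b1 then 2^-1 else 2 ^- t.
Definition q2 {R : realType} (b1 : bool) (t : nat) : R :=
  if b1 then 2 ^- t else 2^-1.

Definition Ainf : set Omega :=
  [set x | forall n, exists t, (n < t)%N /\ X t x = true].

(* Main.v *)
Require Import Defs.
From HB Require Import structures.
From mathcomp Require Import all_boot all_order all_algebra.
From mathcomp Require Import all_classical all_reals all_analysis measurable_realfun.
Import Order.TTheory GRing.Theory Num.Theory.
Local Open Scope classical_set_scope.
Local Open Scope ring_scope.
Set Implicit Arguments. Unset Strict Implicit. Unset Printing Implicit Defensive.
Section A.
Local Open Scope ereal_scope.

Lemma Ftime_meas t (A : set Omega) : Ftime t A -> measurable A.
Proof.
apply: smallest_sub => //; first exact: smallest_sigma_algebra.
move=> B [s [b [/andP[s1 _] ->]]]; apply: sub_sigma_algebra; exists s, b; split=> //.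
Qed.

Lemma Ftime_mono s t (A : set Omega) : (s <= t)%N -> Ftime s A -> Ftime t A.
Proof.
move=> st; apply: sub_sigma_algebra2 => B [r [b [/andP[r1 rs] ->]]].
exists r, b; split => //; rewrite r1 /=; exact: leq_trans rs st.
Qed.

Lemma X_Ftime s t b : (1 <= s <= t)%N -> Ftime t (X s @^-1` [set b] : set Omega).
Proof. by move=> h; apply: sub_sigma_algebra; exists s, b. Qed.

Lemma X_meas s b : (1 <= s)%N -> measurable (X s @^-1` [set b] : set Omega).
Proof. by move=> h; apply: (@Ftime_meas s); apply: X_Ftime; rewrite h leqnn. Qed.

Definition agree t (x y : Omega) := forall s, (1 <= s <= t)%N -> X s x = X s y.

Lemma Ftime_inv t (A : set Omega) : Ftime t A ->
  forall x y, agree t x y -> A x -> A y.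
Proof.
pose G := [set B : set Omega | forall x y, agree t x y -> B x -> B y].
have sG : sigma_algebra setT G.
  split.
  - by move=> x y _.
  - move=> B GB x y axy [_ nBx]; split=> // By; apply: nBx; apply: (GB y x) => // s hs.
    by rewrite (axy s hs).
  - move=> F GF x y axy [n _ Fx]; exists n => //; exact: (GF n x y).
have : Ftime t `<=` G.
  apply: smallest_sub => //.
  move=> B [s [b [hs ->]]] x y axy /=; by rewrite (axy s hs).
by move=> H /H.
Qed.

End A.
Section B.

Lemma FtimeT t : Ftime t (setT : set Omega).
Proof. exact: (@measurableT _ (g_sigma_algebraType (gen_upto t))). Qed.

Lemma FtimeI t (A B : set Omega) : Ftime t A -> Ftime t B -> Ftime t (A `&` B).
Proof. exact: (@measurableI _ (g_sigma_algebraType (gen_upto t))). Qed.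

Lemma FtimeU t (A B : set Omega) : Ftime t A -> Ftime t B -> Ftime t (A `|` B).
Proof. exact: (@measurableU _ (g_sigma_algebraType (gen_upto t))). Qed.

Lemma Ftime0 t : Ftime t (set0 : set Omega).
Proof. exact: (@measurable0 _ (g_sigma_algebraType (gen_upto t))). Qed.

Lemma FtimeC t (A : set Omega) : Ftime t A -> Ftime t (~` A).
Proof. exact: (@measurableC _ (g_sigma_algebraType (gen_upto t))). Qed.

Definition gcyl n (J b : nat -> bool) : set Omega :=
  [set x | forall t, (1 <= t <= n)%N -> J t -> X t x = b t].

Lemma gcyl_Ftime n J b : Ftime n (gcyl n J b).
Proof.
elim: n => [|n IH].
  rewrite (_ : gcyl 0 J b = setT); first exact: FtimeT.
  by apply/seteqP; split => // x _ t /andP[t1 t0]; move: (leq_trans t1 t0).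
rewrite (_ : gcyl n.+1 J b = gcyl n J b `&`
   (if J n.+1 then X n.+1 @^-1` [set b n.+1] else setT)).
  apply: FtimeI; first exact: (Ftime_mono (leqnSn n)).
  case: (J n.+1); last exact: FtimeT.
  by apply: X_Ftime; rewrite leqnn.
apply/seteqP; split => x /=.
  move=> h; split.
    by move=> t /andP[t1 tn] Jt; apply: h => //; rewrite t1 (leq_trans tn).
  by case Jn: (J n.+1) => //=; apply: (h n.+1) => //; rewrite leqnn.
move=> [h1 h2] t /andP[t1]; rewrite leq_eqVlt => /orP[/eqP ->|tn] Jt.
  by move: h2; rewrite Jt.
by apply: h1 => //; rewrite t1 -ltnS.
Qed.

Lemma gcyl_meas n J b : measurable (gcyl n J b).
Proof. apply: Ftime_meas; exact: gcyl_Ftime. Qed.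

End B.
From mathcomp Require Import ring lra.
Section C.
Variable R : realType.
Variable q : bool -> nat -> R.
Variable P : probability Omega R.
Hypothesis hP : forall n b, (1 <= n)%N -> P (cyl n b) = (cyl_prob q n b)%:E.

Definition wgt (b : nat -> bool) t : R := if b t then q (b 1%N) t else 1 - q (b 1%N) t.
Definition upd (b : nat -> bool) s v := fun t => if t == s then v else b t.

Lemma count_aux (J : nat -> bool) s l : ~~ J s ->
  count (predC J) l = (count (predC (fun t => J t || (t == s))) l + count (pred1 s) l)%N.
Proof.
move=> nJs; elim: l => //= x l ->.
case: (eqVneq x s) => [->|xs]; first by rewrite (negbTE nJs) /= addnS.
by rewrite orbF /= add0n addnA.
Qed.

Lemma gcyl_prob n (J b : nat -> bool) : (1 <= n)%N -> J 1%N ->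
  P (gcyl n J b) = (2^-1 * \prod_(2 <= t < n.+1 | J t) wgt b t)%:E.
Proof.
move=> n1.
suff H : forall k (J b : nat -> bool), count (predC J) (index_iota 2 n.+1) = k -> J 1%N ->
  P (gcyl n J b) = (2^-1 * \prod_(2 <= t < n.+1 | J t) wgt b t)%:E by exact: H.
elim=> [|k IH] {}J {}b.
- move=> /eqP; rewrite -leqn0 leqNgt -has_count => /negP nh J1.
  have Jt t : (2 <= t < n.+1)%N -> J t.
    move=> ht; apply/negPn/negP => nJ; apply: nh; apply/hasP; exists t => //.
    by rewrite mem_index_iota.
  rewrite (_ : gcyl n J b = cyl n b); last first.
    rewrite /gcyl /cyl; apply/seteqP; split => x h t /andP[t1 tn].
      apply: h; first by rewrite t1.
      by move: t1; rewrite leq_eqVlt => /orP[/eqP<-//|t2]; apply: Jt; rewrite t2 ltnS.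
    by move=> _; apply: h; rewrite t1.
  rewrite hP // /cyl_prob; congr (_%:E); congr (_ * _).
  rewrite big_nat_cond [RHS]big_nat_cond; apply: eq_bigl => t.
  by rewrite andbT; apply/idP/idP => [h|/andP[]//]; rewrite h Jt.
- move=> hk J1.
  have : has (predC J) (index_iota 2 n.+1) by rewrite has_count hk.
  move=> /hasP[s]; rewrite mem_index_iota => /andP[s2 sn] /= nJs.
  pose J' := fun t => J t || (t == s).
  have hk' : count (predC J') (index_iota 2 n.+1) = k.
    move: hk; rewrite (count_aux _ nJs) count_uniq_mem ?iota_uniq //.
    by rewrite mem_index_iota s2 sn addn1 => -[].
  have J'1 : J' 1%N by rewrite /J' J1.
  have s1 : (1%N == s) = false by apply/negbTE; rewrite neq_ltn (leq_trans _ s2).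
  have e : gcyl n J b = gcyl n J' (upd b s true) `|` gcyl n J' (upd b s false).
    rewrite /gcyl; apply/seteqP; split => x.
      move=> h; case hx: (X s x); [left|right] => t ht /orP[Jt|/eqP ->];
        rewrite /upd ?eqxx //; (try by []);
        (case: eqVneq => [ets|_]; [by move: nJs; rewrite -ets Jt| exact: h]).
    by move=> [] h t ht Jt; rewrite (h t ht) /J' ?Jt // /upd;
      (case: eqVneq => [ets|//]; move: nJs; rewrite -ets Jt).
  have disj : gcyl n J' (upd b s true) `&` gcyl n J' (upd b s false) = set0.
    rewrite /gcyl; apply/seteqP; split => // x [h1 h2].
    have hs : (1 <= s <= n)%N by rewrite (leq_trans _ s2).
    move: (h1 s hs) (h2 s hs); rewrite /J' /upd eqxx orbT => /(_ isT) -> /(_ isT).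
    by [].
  have m1 := gcyl_meas n J' (upd b s true).
  have m2 := gcyl_meas n J' (upd b s false).
  rewrite e measureU //.
  transitivity ((2^-1 * \prod_(2 <= t < n.+1 | J' t) wgt (upd b s true) t)%:E +
     (2^-1 * \prod_(2 <= t < n.+1 | J' t) wgt (upd b s false) t)%:E).
    by congr (_ + _); apply: IH.
  rewrite -EFinD; congr (_%:E).
  have prodJ' v : \prod_(2 <= t < n.+1 | J' t) wgt (upd b s v) t =
      (if v then q (b 1%N) s else 1 - q (b 1%N) s) *
      \prod_(2 <= t < n.+1 | J t) wgt b t.
    rewrite big_mkcond (bigD1_seq s) ?mem_index_iota ?s2 ?iota_uniq //=.
    rewrite [in RHS]big_mkcond (bigD1_seq s) ?mem_index_iota ?s2 ?iota_uniq //=.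
    rewrite /J' eqxx orbT (negbTE nJs) mul1r /wgt /upd eqxx s1; congr (_ * _).
    by apply: eq_bigr => t /negbTE ts; rewrite ts orbF.
  rewrite !prodJ'; ring.
Qed.

End C.
Section D.
Variable R : realType.
Variable q : bool -> nat -> R.
Variable P : probability Omega R.
Hypothesis hP : forall n b, (1 <= n)%N -> P (cyl n b) = (cyl_prob q n b)%:E.

Lemma probX1 v : P (X 1 @^-1` [set v]) = (2^-1)%:E.
Proof.
have -> : X 1 @^-1` [set v] = cyl 1 (fun _ => v).
  rewrite /cyl; apply/seteqP; split => x /=.
    by move=> h t; rewrite -eqn_leq => /eqP <-.
  by move=> h; apply: h.
by rewrite hP // /cyl_prob big_geq ?mulr1.
Qed.

Lemma probX1Xt v t : (2 <= t)%N ->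
  P (X 1 @^-1` [set v] `&` X t @^-1` [set true]) = (2^-1 * q v t)%:E.
Proof.
move=> t2.
pose J := fun u => (u == 1%N) || (u == t).
pose b := fun u => if u == 1%N then v else true.
have t1 : (t == 1%N) = false by apply/negbTE; rewrite neq_ltn t2 orbT.
have -> : X 1 @^-1` [set v] `&` X t @^-1` [set true] = gcyl t J b.
  rewrite /gcyl; apply/seteqP; split => x /=.
    move=> [h1 h2] u hu /orP[]/eqP ->; first by rewrite h1.
    by rewrite /b t1 h2.
  move=> h; split.
    by rewrite (h 1%N) // (leq_trans _ t2).
  rewrite (h t) /b ?t1 //; first by rewrite leqnn (leq_trans _ t2).
  by rewrite /J eqxx orbT.
rewrite (gcyl_prob hP) ?(leq_trans _ t2) //; congr (_%:E); congr (_ * _).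
rewrite big_mkcond big_nat_recr //= big1_seq ?mul1r.
  by rewrite /J eqxx orbT /wgt /b t1 eqxx.
move=> u /andP[_]; rewrite mem_index_iota => /andP[u2 ut].
have -> : J u = false.
  by apply/negbTE; rewrite negb_or !neq_ltn; apply/andP; split; apply/orP; [right|left].
by [].
Qed.

Definition Dset n m v : set Omega :=
  gcyl m (fun u => (u == 1%N) || (n < u)%N) (fun u => if u == 1%N then v else false).

Lemma probD n k v : (1 <= n)%N ->
  P (Dset n (n + k) v) = (2^-1 * \prod_(n.+1 <= t < (n + k).+1) (1 - q v t))%:E.
Proof.
move=> n1; rewrite /Dset (gcyl_prob hP) ?(leq_trans n1) ?leq_addr //.
congr (_%:E); congr (_ * _).
rewrite big_mkcond (big_cat_nat _ (n:=n.+1)) //=; last by rewrite ltnS leq_addr.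
rewrite big1_seq ?mul1r; last first.
  move=> u /andP[_]; rewrite mem_index_iota => /andP[u2 un].
  have -> : (u == 1%N) = false by apply/negbTE; rewrite neq_ltn u2 orbT.
  by rewrite /= ltnNge -ltnS un.
apply: eq_big_nat => u /andP[nu _].
have u1 : (u == 1%N) = false by apply/negbTE; rewrite neq_ltn (leq_trans _ nu) ?orbT.
rewrite u1 /=; case: ifP => [_|]; last by rewrite nu.
by rewrite /wgt u1 eqxx.
Qed.

End D.
Section E.
Variable R : realType.
Variable q : bool -> nat -> R.
Variable P : probability Omega R.
Hypothesis hP : forall n b, (1 <= n)%N -> P (cyl n b) = (cyl_prob q n b)%:E.
Variable a : bool.
Hypothesis qa : forall t, q a t = 2^-1.

Lemma small_eq0 (x : R) : 0 <= x -> (forall k, x <= (2^-1) ^+ k) -> x = 0.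
Proof.
move=> x0 hk; apply/eqP; rewrite eq_le x0 andbT; apply/negP => /negP.
rewrite -ltNge => xp.
have xi : 0 < x^-1 by rewrite invr_gt0.
have bx := archi_boundP (ltW xi).
set k := Num.bound _ in bx.
have : k%:R <= (2 ^+ k : R).
  by rewrite -natrX ler_nat ltnW // ltn_expl.
move=> kle.
have : x^-1 < 2 ^+ k by exact: lt_le_trans bx kle.
rewrite invf_plt ?posrE ?exprn_gt0 // -exprVn => h.
by move: (hk k); rewrite leNgt h.
Qed.

Local Open Scope ereal_scope.
Definition Nset n : set Omega :=
  [set x | X 1 x = a /\ forall t, (n < t)%N -> X t x = false].

Lemma Nset_meas n : measurable (Nset n).
Proof.
have -> : Nset n = X 1 @^-1` [set a] `&`
    \bigcap_t (if (n < t)%N then X t @^-1` [set false] else setT).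
  apply/seteqP; split => x /=.
    move=> [h1 h2]; split => // t _; case: ifP => // nt; exact: h2.
  move=> [h1 h2]; split => // t nt; move: (h2 t I); rewrite nt; exact.
apply: measurableI; first exact: X_meas.
apply: bigcapT_measurable => t; case: ifP => nt //.
by apply: X_meas; apply: leq_trans nt.
Qed.

Lemma Nset_null n : (1 <= n)%N -> P (Nset n) = 0.
Proof.
move=> n1.
have hk k : P (Nset n) <= (2^-1 * (2^-1) ^+ k)%R%:E.
  have e : ((2:R)^-1 ^+ k = \prod_(n.+1 <= t < (n + k).+1) (1 - q a t))%R.
    rewrite (eq_bigr (fun _ => 2^-1)%R) ?prodr_const_nat ?subSS ?addKn // => t _.
    by rewrite qa; lra.
  rewrite e -(probD hP) //.
  apply: le_measure; rewrite ?inE; [exact: Nset_meas|exact: gcyl_meas|].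
  move=> x [h1 h2]; rewrite /Dset /gcyl => u /andP[u1 _] /orP[/eqP ->|nu].
    by rewrite eqxx.
  have u1' : (u == 1%N) = false.
    by apply/negbTE; rewrite neq_ltn (leq_ltn_trans n1 nu) orbT.
  by rewrite h2 // u1'.
have P0 : 0 <= P (Nset n) by [].
have Pfin : P (Nset n) = (fine (P (Nset n)))%:E.
  rewrite fineK // ge0_fin_numE //; apply: (le_lt_trans (hk 0%N)); exact: ltey.
rewrite Pfin; congr (_%:E); apply: small_eq0.
  by rewrite -lee_fin -Pfin.
move=> k; rewrite -lee_fin -Pfin (le_trans (hk k)) // lee_fin.
by rewrite ler_piMl // ?exprn_ge0 // invf_le1 // ler1n.
Qed.

Definition Nall : set Omega := \bigcup_n Nset n.+1.

Lemma Nall_meas : measurable Nall.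
Proof. by apply: bigcupT_measurable => n; exact: Nset_meas. Qed.

Lemma Nall_null : P Nall = 0.
Proof.
apply/eqP; rewrite eq_le measure_ge0 andbT.
apply: le_trans (measure_sigma_subadditive _ (fun n => Nset_meas n.+1) Nall_meas _) _.
  by [].
by rewrite eseries0 // => i _ _; exact: Nset_null.
Qed.

Lemma lower_half (F : set Omega) : measurable F ->
  (X 1 @^-1` [set a] `&` Ainf `<=` F) ->
  (2^-1)%R%:E <= P (X 1 @^-1` [set a] `&` F).
Proof.
move=> mF hF.
have sub : X 1 @^-1` [set a] `<=` (X 1 @^-1` [set a] `&` F) `|` Nall.
  move=> x Xa; have [Fx|nFx] := pselect (F x); first by left.
  right.
  have : exists n, forall t, (n < t)%N -> X t x = false.
    apply: contrapT => hne; apply: nFx; apply: hF; split => // n.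
    apply: contrapT => hn; apply: hne; exists n => t nt.
    apply/negbTE/negP => Xt; apply: hn; exists t; split => //.
  move=> [n hn]; exists n => //; split => // t nt; apply: hn.
  exact: ltn_trans nt.
have mS : measurable (X 1 @^-1` [set a] `&` F : set Omega).
  by apply: measurableI => //; exact: X_meas.
rewrite -(probX1 hP a).
have h1 : P (X 1 @^-1` [set a] : set Omega) <= P ((X 1 @^-1` [set a] `&` F) `|` Nall).
  by apply: le_measure => //; rewrite inE; [exact: X_meas | exact: measurableU mS Nall_meas].
apply: (le_trans h1).
apply: (le_trans (measureU2 _ mS Nall_meas)).
by rewrite [X in _ + X <= _](_ : _ = 0) ?adde0 //; exact: Nall_null.
Qed.

End E.
Section F0.
Local Open Scope ereal_scope.

Lemma finite_at_meas tau : stopping_time tau -> measurable (finite_at tau).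
Proof.
move=> st.
have -> : finite_at tau = \bigcup_r [set x | exists s, tau x = Some s /\ (s <= r)%N].
  rewrite /finite_at; apply/seteqP; split => x /=.
    by case hx: (tau x) => [s|//] _; exists s => //; exists s.
  by move=> [r _ [s [-> _]]].
apply: bigcupT_measurable => r; exact: Ftime_meas (st r).
Qed.

Lemma geo_small (R : realType) (e : R) : (0 < e)%R -> exists k, ((2^-1) ^+ k < e)%R.
Proof.
move=> xp.
have xi : (0 < e^-1)%R by rewrite invr_gt0.
have bx := archi_boundP (ltW xi).
set k := Num.bound _ in bx.
have kle : (k%:R <= (2 ^+ k : R))%R.
  by rewrite -natrX ler_nat ltnW // ltn_expl.
have : (e^-1 < 2 ^+ k)%R by exact: lt_le_trans bx kle.
by rewrite invf_plt ?posrE ?exprn_gt0 // -exprVn => h; exists k.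
Qed.

Definition tauN n (x : Omega) : option nat :=
  match pselect (exists t, (n < t)%N && X t x) with
  | left h => Some (ex_minn h)
  | right _ => None
  end.

Lemma tauN_stop n : stopping_time (tauN n).
Proof.
move=> r.
have -> : [set x | exists s, tauN n x = Some s /\ (s <= r)%N] =
    \bigcup_(t in [set t | (n < t <= r)%N]) (X t @^-1` [set true] : set Omega).
  apply/seteqP; split => x /=.
    rewrite /tauN; case: pselect => [h|nh] /= [s [hs sr]]; last by [].
    case: hs => hs; rewrite -hs in sr.
    move: sr; case: ex_minnP => m /andP[nm Xm] _ mr; exists m => //; by rewrite /= nm mr.
  move=> [t /andP[nt tr] Xt]; rewrite /tauN; case: pselect => [h|]; last first.
    by move=> nh; exfalso; apply: nh; exists t; rewrite nt Xt.
  exists (ex_minn h); split => //.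
  case: ex_minnP => m _ hm; apply: leq_trans tr; apply: hm; by rewrite nt Xt.
apply: (@bigcup_measurable _ (g_sigma_algebraType (gen_upto r))) => t /andP[nt tr].
by apply: X_Ftime; rewrite tr (leq_trans _ nt).
Qed.

Lemma tauN_Ainf n : Ainf `<=` finite_at (tauN n).
Proof.
move=> x hx; rewrite /finite_at /tauN /=; case: pselect => // nh.
exfalso; apply: nh; have [t [nt Xt]] := hx n; exists t; by rewrite nt Xt.
Qed.

End F0.

Section F.
Local Open Scope ereal_scope.
Variable R : realType.
Variable q : bool -> nat -> R.
Variable P : probability Omega R.
Hypothesis hP : forall n b, (1 <= n)%N -> P (cyl n b) = (cyl_prob q n b)%:E.
Variable a : bool.
Hypothesis qna : forall t, q (~~ a) t = (2 ^- t)%R.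

Lemma tauN_prob n : (1 <= n)%N ->
  P (finite_at (tauN n)) <= (2^-1 + 2^-1 / 2 ^+ n)%R%:E.
Proof.
move=> n1.
pose G k : set Omega := X 1 @^-1` [set ~~ a] `&` X (k + n.+1) @^-1` [set true].
have mG k : measurable (G k).
  by apply: measurableI; apply: X_meas; rewrite ?addnS.
have mA : measurable (X 1 @^-1` [set a] : set Omega) by exact: X_meas.
have mU : measurable (\bigcup_k G k) by exact: bigcupT_measurable.
have sub : finite_at (tauN n) `<=` X 1 @^-1` [set a] `|` \bigcup_k G k.
  move=> x; rewrite /finite_at /tauN /=; case: pselect => // -[t /andP[nt Xt]] _.
  case: (eqVneq (X 1 x) a) => [|Xa]; first by left.
  right; exists (t - n.+1)%N => //; split; last by rewrite subnK.
  by rewrite /preimage /=; move: Xa; case: (X 1 x); case: a.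
have h1 : P (finite_at (tauN n)) <= P (X 1 @^-1` [set a] `|` \bigcup_k G k).
  apply: le_measure => //; rewrite inE //.
    exact: finite_at_meas (tauN_stop n).
  exact: measurableU.
apply: (le_trans h1); apply: (le_trans (measureU2 _ mA mU)).
rewrite EFinD; apply: leeD.
  by rewrite -(probX1 hP a); exact: lexx.
apply: (le_trans (measure_sigma_subadditive _ mG mU _)) => //.
have -> : (fun m => \sum_(0 <= k < m) P (G k)) =
    eseries (fun k => (2^-1 / (2 ^ (k + n.+1))%:R)%R%:E).
  apply/funext => m; rewrite /eseries /=; apply: eq_bigr => k _.
  transitivity ((2^-1 * q (~~ a) (k + n.+1))%R%:E).
    by apply: (probX1Xt hP); rewrite addnS ltnS (leq_trans n1) ?leq_addl.
  by rewrite qna natrX.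
by have := @cvg_geometric_eseries_half R (2^-1)%R n => /cvg_lim ->.
Qed.

End F.
Section G0.
Local Open Scope ereal_scope.
Import HBNNSimple.

Lemma sint_le_int (R : realType) (mu : {measure set Omega -> \bar R})
  (f : Omega -> \bar R) (h : {nnsfun Omega >-> R}) :
  (forall x, 0 <= f x) -> (forall x, (h x)%:E <= f x) ->
  sintegral mu h <= \int[mu]_x f x.
Proof.
move=> f0 hf; rewrite ge0_integralTE //; apply: ereal_sup_ubound; by exists h.
Qed.

Lemma limn_esup_ge0 (R : realType) (u : (\bar R)^nat) :
  (forall n, 0 <= u n) -> 0 <= limn_esup u.
Proof.
move=> u0; rewrite limn_esup_lim; apply: lime_ge; first exact: is_cvg_esups.
apply: nearW => n; apply: le_trans (u0 n) _; apply: ereal_sup_ubound; exists n => /=.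
  exact: leqnn.
by [].
Qed.

Lemma stopped_ge0 (R : realType) (E : nat -> Omega -> \bar R) tau x :
  (forall t x, 0 <= E t x) -> 0 <= stopped E tau x.
Proof.
move=> E0; rewrite /stopped; case: (tau x) => // ; exact: limn_esup_ge0.
Qed.

Lemma sintegral_comb (R : realType) (mu : {measure set Omega -> \bar R})
  (B C : set Omega) (mB : measurable B) (mC : measurable C) (k l : R)
  (k0 : (0 <= k)%R) (l0 : (0 <= l)%R) :
  sintegral mu (add_nnsfun (scale_nnsfun (indic_nnsfun R mB) k0)
                            (scale_nnsfun (indic_nnsfun R mC) l0)) =
  k%:E * mu B + l%:E * mu C.
Proof.
rewrite sintegralD /scale_nnsfun.
by rewrite !sintegralrM !sintegral_indic.
Qed.

End G0.
Unset Implicit Arguments.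
Section G.
Local Open Scope ereal_scope.
Import HBNNSimple.
Variable R : realType.
Variable q : bool -> nat -> R.
Variable P : probability Omega R.
Hypothesis hP : forall n b, (1 <= n)%N -> P (cyl n b) = (cyl_prob q n b)%:E.
Variable a : bool.
Hypothesis qa : forall t, q a t = 2^-1%R.
Hypothesis qpos : forall t, (0 < q (~~ a) t)%R.
Variable E : nat -> Omega -> \bar R.
Hypothesis hE0 : forall t x, 0 <= E t x.
Hypothesis hEm : forall t (B : set (\bar R)), measurable B -> Ftime t (E t @^-1` B).
Hypothesis hEint : forall tau, stopping_time tau -> \int[P]_x stopped E tau x <= 1.

Definition x0 : Omega := fun i => if i == 0%N then ~~ a else true.

Lemma x0_Ainf : Ainf x0.
Proof. by move=> n; exists n.+2; split. Qed.

Lemma E_const t x y : agree t x y -> E t x = E t y.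
Proof.
move=> axy; have := hEm t [set E t x] (emeasurable_set1 (E t x)).
by move=> /Ftime_inv /(_ x y axy erefl) ->.
Qed.

Lemma E0_le1 x : E 0 x <= 1.
Proof.
pose tau0 := fun _ : Omega => Some 0%N.
have st : stopping_time tau0.
  move=> r; rewrite (_ : [set x | _] = setT); first exact: FtimeT.
  by apply/seteqP; split => // y _; exists 0%N.
have := hEint tau0 st; rewrite /stopped /tau0.
have e : forall y, E 0 y = E 0 x by move=> y; apply: E_const => s /andP[s1 s0]; move: (leq_trans s1 s0).
under eq_integral do rewrite e.
rewrite integral_cst // [X in _ * X](_ : _ = 1) ?mule1 //; exact: probability_setT.
Qed.


Lemma delta_exists (e : \bar R) : 0 < e -> exists2 d : R, (0 < d)%R & d%:E <= e.
Proof.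
case: e => [r| |] //.
  by move=> r0; exists r.
by move=> _; exists 1%R => //; rewrite leey.
Qed.

Lemma cyl_x0_pos t : (0 < cyl_prob q t (fun s => X s x0))%R.
Proof.
rewrite /cyl_prob mulr_gt0 // big_seq; apply: prodr_gt0 => s.
rewrite mem_index_iota => /andP[s2 _].
have -> : X s x0 = true.
  by rewrite /X /x0; case: s s2 => // -[].
by [].
Qed.

Lemma part2 (c : R) : (forall x, Ainf x -> c%:E <= ereal_sup (range (fun t => E t x))) ->
  (c < 2)%R.
Proof.
move=> hc; rewrite ltNge; apply/negP => c2.
suff Ex0 : forall t, (1 <= t)%N -> E t x0 <= 0.
  have := hc x0 x0_Ainf; apply/negP; rewrite -ltNge.
  apply: (@le_lt_trans _ _ 1%E).
    apply: ge_ereal_sup => _ [t _ <-]; case: t => [|t]; first exact: E0_le1.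
    exact: le_trans (Ex0 _ _) _.
  rewrite lte_fin; lra.
move=> t t1; rewrite leNgt; apply/negP => /delta_exists [d d0 dE].
set b0 := fun s => X s x0.
set p := cyl_prob q t b0.
have p0 : (0 < p)%R by exact: cyl_x0_pos.
have dp0 : (0 < d * p)%R by rewrite mulr_gt0.
set eps := (Num.min (d * p) 2^-1)%R.
have eps0 : (0 < eps)%R by rewrite lt_min dp0 invr_gt0 ltr0n.
have epsd : (eps <= d * p)%R by rewrite ge_min lexx.
have epsh : (eps <= 2^-1)%R by rewrite ge_min lexx orbT.
set ce := (c - eps)%R.
have ce1 : (1 < ce)%R by rewrite /ce; lra.
pose S := [set y : \bar R | ce%:E <= y].
have mS : measurable S.
  rewrite (_ : S = `[ce%:E, +oo[%classic); first exact: emeasurable_itv.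
  by apply/seteqP; split => y /=; rewrite in_itv /= andbT.
pose F := [set x : Omega | exists r, (0 < r)%N /\ ce%:E <= E r x].
have mF : measurable F.
  rewrite (_ : F = \bigcup_r (if (0 < r)%N then E r @^-1` S else set0)).
    apply: bigcupT_measurable => r; case: ifP => // _.
    exact: Ftime_meas (hEm r S mS).
  apply/seteqP; split => x /=.
    by move=> [r [r0 hr]]; exists r => //; rewrite r0.
  by move=> [r _]; case: ifP => // r0 hr; exists r.
pose B : set Omega := X 1 @^-1` [set a] `&` F.
have mB : measurable B by apply: measurableI => //; exact: X_meas.
pose C := cyl t b0.
have mC : measurable C.
  rewrite (_ : C = gcyl t xpredT b0); first exact: gcyl_meas.
  rewrite /C /cyl /gcyl; apply/seteqP; split => x /= h s hs.
    by move=> _; exact: h.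
  exact: h.
pose sig (x : Omega) := match pselect (exists r, (0 < r)%N && (ce%:E <= E r x)) with
  | left h => Some (ex_minn h) | right _ => None end.
have sigP x : (exists r, (0 < r)%N && (ce%:E <= E r x)) ->
    exists m, [/\ sig x = Some m, (0 < m)%N, ce%:E <= E m x &
      (forall r, (0 < r)%N -> ce%:E <= E r x -> (m <= r)%N)].
  move=> hex; rewrite /sig; case: pselect => [h|//].
  case: ex_minnP => m /andP[m0 hm] hmin; exists m; split => //.
  by move=> r r0 hr; apply: hmin; rewrite r0.
have sigN x : ~ (exists r, (0 < r)%N && (ce%:E <= E r x)) -> sig x = None.
  by move=> hn; rewrite /sig; case: pselect.
pose tau (x : Omega) := if X 1 x == a then sig x else Some t.
have tau_st : stopping_time tau.
  move=> s; have [->|s0] := eqVneq s 0%N.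
    rewrite (_ : [set x | _] = set0); first exact: Ftime0.
    apply/seteqP; split => // x [m []]; rewrite /tau; case: eqP => _.
      have [hex|hn] := pselect (exists r, (0 < r)%N && (ce%:E <= E r x)).
        by have [m' [-> m0 _ _]] := sigP x hex => -[<-]; rewrite leqn0 => /eqP m00; move: m0; rewrite m00.
      by rewrite sigN.
    by move=> [<-]; rewrite leqn0 => /eqP t0; move: t1; rewrite t0.
  have s1 : (1 <= s)%N by rewrite lt0n.
  rewrite (_ : [set x | _] = (X 1 @^-1` [set a] `&`
       \bigcup_(r in [set r | (0 < r <= s)%N]) E r @^-1` S) `|`
     (X 1 @^-1` [set ~~ a] `&` (if (t <= s)%N then setT else set0))).
    apply: FtimeU; apply: FtimeI.
    - by apply: X_Ftime; rewrite s1.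
    - apply: (@bigcup_measurable _ (g_sigma_algebraType (gen_upto s))) => r /andP[r0 rs].
      exact: Ftime_mono rs (hEm r S mS).
    - by apply: X_Ftime; rewrite s1.
    - by case: ifP => _; [exact: FtimeT|exact: Ftime0].
  apply/seteqP; split => x /=.
    move=> [m []]; rewrite /tau; case: eqP => Xa.
      have [hex|hn] := pselect (exists r, (0 < r)%N && (ce%:E <= E r x)).
        have [m' [-> m0 hm _]] := sigP x hex => -[<-] ms.
        by left; split => //; exists m'; [rewrite /= m0 ms | exact: hm].
      by rewrite sigN.
    move=> [<-] ts; right; split; last by rewrite ts.
    by move: Xa; rewrite /preimage /=; case: (X 1 x); case: a.
  move=> [[Xa [r /andP[r0 rs] hr]]|[Xa ht]].
    have hex : exists r, (0 < r)%N && (ce%:E <= E r x) by exists r; rewrite r0.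
    have [m [hm m0 _ hmin]] := sigP x hex.
    exists m; rewrite /tau Xa eqxx hm; split => //.
    exact: leq_trans (hmin r r0 hr) rs.
  exists t; rewrite /tau; have -> : (X 1 x == a) = false.
    by move: Xa; rewrite /preimage /=; case: (X 1 x); case: a.
  by split => //; move: ht; case: ifP.
have ce0 : (0 <= ce)%R by lra.
have d0' : (0 <= d)%R by lra.
pose h := add_nnsfun (scale_nnsfun (indic_nnsfun R mB) ce0)
                     (scale_nnsfun (indic_nnsfun R mC) d0').
have hle : forall x, (h x)%:E <= stopped E tau x.
  move=> x; rewrite /h /= !mindicE.
  have [Bx|nBx] := pselect (B x).
    have nCx : ~ C x.
      move=> Cx; have := Cx 1%N t1; rewrite /b0 /x0 /X /=; move: Bx => [+ _].
      by rewrite /preimage /= /X => ->; case: a.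
    rewrite (mem_set Bx) (memNset nCx) mulr1 mulr0 addr0.
    move: Bx => [Xa [r [r0 hr]]].
    have hex : exists r, (0 < r)%N && (ce%:E <= E r x) by exists r; rewrite r0.
    have [m [hm _ hm' _]] := sigP x hex.
    by rewrite /stopped /tau Xa eqxx hm.
  rewrite (memNset nBx) mulr0 add0r.
  have [Cx|nCx] := pselect (C x); last first.
    by rewrite (memNset nCx) mulr0; exact: stopped_ge0.
  rewrite (mem_set Cx) mulr1.
  have Xa : (X 1 x == a) = false.
    have := Cx 1%N t1; rewrite /b0 /x0 /X /= => ->; by case: a.
  rewrite /stopped /tau Xa (@E_const t x x0) //.
have hint := hEint tau tau_st.
have hs := le_trans (sint_le_int P (fun x => @stopped_ge0 R E tau x hE0) hle) hint.
rewrite sintegral_comb in hs.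
have PB : (2^-1)%R%:E <= P B.
  apply: (lower_half hP qa mF) => x [Xa Ax].
  have hcx := hc x Ax.
  have : ce%:E < ereal_sup (range (fun t => E t x)).
    by apply: lt_le_trans hcx; rewrite lte_fin /ce; lra.
  move=> /ereal_sup_gt [_ [r _ <-] hr]; exists r; split; last exact: ltW.
  rewrite lt0n; apply/negP => /eqP r0; move: hr; rewrite r0 => hr'.
  have := E0_le1 x; apply/negP; rewrite -ltNge; apply: lt_trans hr'.
  by rewrite lte_fin.
have PC : P C = p%:E := hP t b0 t1.
have : (ce * 2^-1 + d * p)%R%:E <= 1.
  apply: le_trans hs; rewrite EFinD (EFinM ce) (EFinM d); apply: leeD.
    by apply: lee_wpmul2l => //; rewrite lee_fin.
  by apply: lee_wpmul2l; [rewrite lee_fin | rewrite -PC; exact: lexx].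
rewrite lee_fin => hfin.
have : (d * p <= 0)%R by rewrite /ce in hfin; lra.
by rewrite leNgt dp0.
Qed.

End G.
Theorem mainTheorem10 (R : realType) (P1 P2 : probability Omega R) :
  (forall n b, (1 <= n)%N -> P1 (cyl n b) = (cyl_prob q1 n b)%:E) ->
  (forall n b, (1 <= n)%N -> P2 (cyl n b) = (cyl_prob q2 n b)%:E) ->
  let Pfam := [set P | P = P1 \/ P = P2] in
  mu_star Pfam Ainf = (2^-1)%:E /\
  (forall (E : nat -> Omega -> \bar R) (c : R),
     e_process Pfam E -> 1 <= c ->
     (forall x, Ainf x -> (c%:E <= ereal_sup (range (fun t => E t x)))%E) ->
     c < 2).
Proof.
move=> h1 h2 Pfam.
have half_le1 : (2^-1 : R) <= 1 by lra.
have q1a : forall t, q1 (R:=R) true t = 2^-1 by [].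
have q1n : forall t, q1 (R:=R) (~~ true) t = 2 ^- t by [].
have q2n : forall t, q2 (R:=R) (~~ false) t = 2 ^- t by [].
split.
  apply/eqP; rewrite eq_le; apply/andP; split.
    apply/lee_addgt0Pr => e e0.
    have [k hk] := geo_small e0.
    apply: (@le_trans _ _ (ereal_sup [set y | exists2 P, Pfam P &
        y = P (finite_at (tauN k.+1))])).
      apply: ereal_inf_lbound; exists (tauN k.+1).
      by split; [exact: tauN_stop | split; [exact: tauN_Ainf | by []]].
    apply: ge_ereal_sup => _ [P [->|->] ->].
      apply: le_trans (tauN_prob h1 q1n (ltn0Sn k)) _.
      rewrite -EFinD lee_fin lerD2l; apply: ltW; apply: le_lt_trans hk.
      by rewrite -exprVn -exprS; apply: ler_wiXn2l => //; try exact: half_le1; rewrite leqW // leqW.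
    apply: le_trans (tauN_prob h2 q2n (ltn0Sn k)) _.
    rewrite -EFinD lee_fin lerD2l; apply: ltW; apply: le_lt_trans hk.
    by rewrite -exprVn -exprS; apply: ler_wiXn2l => //; try exact: half_le1; rewrite leqW // leqW.
  apply: le_ereal_inf_tmp => _ [tau [st [sub ->]]].
  apply: (@le_trans _ _ (P1 (finite_at tau))); last first.
    by apply: ereal_sup_ubound; exists P1 => //; left.
  apply: le_trans (lower_half h1 q1a (finite_at_meas st) _) _.
    by move=> x [_ Ax]; exact: sub.
  apply: le_measure; rewrite ?inE //.
    by apply: measurableI; [exact: X_meas | exact: finite_at_meas st].
  exact: finite_at_meas st.
move=> E c [hE0 hEm hEint] c1 hc.
have qpos : forall t, (0 < q1 (R:=R) (~~ true) t)%R.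
  by move=> t; rewrite /q1 /= invr_gt0 exprn_gt0.
exact: (@part2 R q1 P1 h1 true q1a qpos E hE0 hEm (hEint P1 (or_introl erefl)) c hc).
Qed.
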